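(* Let $M$ be a retract-compatible Coxeter matrix over a finite set $S$ with $|S|\ge2$, and let $A_S$ be its associated Artin group. Then for every $x\in S$ there exists an ordinary retraction $\psi_x:A_S\to A_{S\setminus\{x\}}$ such that $\psi_x(x)\in S\setminus\{x\}$ (in particular $\psi_x(x)\neq 1$).
   Context: A Coxeter matrix over a finite set $S$ is a matrix $M=(m_{s,t})_{s,t\in S}$ with entries in $\mathbb{N}\cup\{\infty\}$, $m_{s,s}=1$, and $m_{s,t}=m_{t,s}\ge 2$ for $s\neq t$. Write $\Pi(s,t,m)$ for the alternating word $sts\cdots$ of length $m$. The Artin group is $A_S=\langle S\mid \Pi(s,t,m_{s,t})=\Pi(t,s,m_{s,t})$ for $s\neq t$, $m_{s,t}\neq\infty\rangle$. For $X\subseteq S$, $A_X$ is the subgroup generated by $X$. $M$ is retract-compatible if all its entries are finite odd numbers and for every triple $a,b,c\in S$ of pairwise distinct elements, up to permuting $a,b,c$, $m_{a,b}=m_{a,c}$ and $m_{b,c}$ divides $m_{a,b}$. A retraction $\varphi:A_S\to A_X$ (homomorphism restricting to the identity on $A_X$) is ordinary if $\varphi(x)=x$ for all $x\in X$ and $\varphi(y)\in X\cup\{1\}$ for all $y\in S\setminus X$. *)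

(* Defs.v *)
From mathcomp Require Import all_boot.
Set Implicit Arguments. Unset Strict Implicit. Unset Printing Implicit Defensive.

Section Artin.
Variable S : finType.

(* A Coxeter matrix: entries in N ∪ {∞}; None stands for ∞. *)
Definition coxeter_matrix (m : S -> S -> option nat) : Prop :=
  [/\ forall s, m s s = Some 1,
      forall s t, m s t = m t s &
      forall s t, s != t -> match m s t with Some k => 2 <= k | None => true end].

(* letters: (s, false) = s, (s, true) = s^-1 *)
Definition letter := (S * bool)%type.
Definition word := seq letter.

Definition Pi (s t : S) (k : nat) : word :=
  mkseq (fun i => (if odd i then t else s, false)) k.

Inductive artin_eq (m : S -> S -> option nat) : word -> word -> Prop :=
| ae_refl w : artin_eq m w w
| ae_sym w1 w2 : artin_eq m w1 w2 -> artin_eq m w2 w1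
| ae_trans w1 w2 w3 : artin_eq m w1 w2 -> artin_eq m w2 w3 -> artin_eq m w1 w3
| ae_free u v s b : artin_eq m (u ++ [:: (s, b); (s, ~~ b)] ++ v) (u ++ v)
| ae_rel u v s t k : s != t -> m s t = Some k ->
    artin_eq m (u ++ Pi s t k ++ v) (u ++ Pi t s k ++ v).

Definition in_sub (m : S -> S -> option nat) (X : {set S}) (w : word) : Prop :=
  exists w', all (fun l : letter => l.1 \in X) w' /\ artin_eq m w w'.

Definition is_hom (m : S -> S -> option nat) (phi : word -> word) : Prop :=
  (forall w w', artin_eq m w w' -> artin_eq m (phi w) (phi w')) /\
  (forall u v, artin_eq m (phi (u ++ v)) (phi u ++ phi v)).

Definition retraction (m : S -> S -> option nat) (X : {set S}) (phi : word -> word) : Prop :=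
  [/\ is_hom m phi,
      forall w, in_sub m X (phi w) &
      forall w, in_sub m X w -> artin_eq m (phi w) w].

Definition ordinary_retraction (m : S -> S -> option nat) (X : {set S}) (phi : word -> word) : Prop :=
  [/\ retraction m X phi,
      forall x, x \in X -> artin_eq m (phi [:: (x, false)]) [:: (x, false)] &
      forall y, y \notin X ->
        (exists2 z, z \in X & artin_eq m (phi [:: (y, false)]) [:: (z, false)]) \/
        artin_eq m (phi [:: (y, false)]) [::]].

Definition retract_compatible (m : S -> S -> option nat) : Prop :=
  (forall s t, exists2 k, m s t = Some k & odd k) /\
  (forall a b c, a != b -> a != c -> b != c ->
     let P a b c := exists p q, [/\ m a b = Some p, m a c = Some p,
                                    m b c = Some q & q %| p] in
     P a b c \/ P a c b \/ P b a c \/ P b c a \/ P c a b \/ P c b a).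
End Artin.

(* Main.v *)
Require Import Defs.
From mathcomp Require Import all_boot.
Set Implicit Arguments. Unset Strict Implicit. Unset Printing Implicit Defensive.

Section H.
Variable S : finType.
Variable m : S -> S -> option nat.

Lemma ae_ctx (w1 w2 : word S) u v : artin_eq m w1 w2 -> artin_eq m (u ++ w1 ++ v) (u ++ w2 ++ v).
Proof.
elim=> {w1 w2}.
- move=> w; exact: ae_refl.
- move=> w1 w2 _ IH; exact: ae_sym.
- move=> w1 w2 w3 _ IH1 _ IH2; exact: ae_trans IH1 IH2.
- move=> u' v' s b.
  have -> : u ++ (u' ++ [:: (s, b); (s, ~~ b)] ++ v') ++ v = (u ++ u') ++ [:: (s, b); (s, ~~ b)] ++ (v' ++ v) by rewrite !catA.
  have -> : u ++ (u' ++ v') ++ v = (u ++ u') ++ (v' ++ v) by rewrite !catA.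
  exact: ae_free.
- move=> u' v' s t k st mk.
  have E : forall w, u ++ (u' ++ w ++ v') ++ v = (u ++ u') ++ w ++ (v' ++ v) by move=> w; rewrite !catA.
  rewrite !E; exact: ae_rel.
Qed.

Lemma ae_cat (a a' b b' : word S) : artin_eq m a a' -> artin_eq m b b' -> artin_eq m (a ++ b) (a' ++ b').
Proof.
move=> H1 H2; apply: (ae_trans (w2 := a' ++ b)).
- have := @ae_ctx a a' [::] b H1; by [].
- have := @ae_ctx b b' a' [::] H2; by rewrite !cats0.
Qed.

Lemma PiD (s t : S) n j : Pi s t (n + j) = Pi s t n ++ (if odd n then Pi t s j else Pi s t j).
Proof.
rewrite /Pi /mkseq iotaD map_cat; congr (_ ++ _).
rewrite add0n -(addn0 n) iotaDl addn0 -map_comp.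
case E: (odd n) => /=; apply: eq_map => i /=; rewrite oddD E; by case: (odd i).
Qed.

Lemma Pi_mul (s t : S) k j : odd k -> artin_eq m (Pi s t k) (Pi t s k) ->
  artin_eq m (Pi s t (j * k)) (Pi t s (j * k)).
Proof.
move=> ok H; elim: j => [|j IH]; first exact: ae_refl.
rewrite mulSn !PiD ok; apply: ae_cat => //; exact: ae_sym.
Qed.

Lemma map_Pi (f : S -> S) (s t : S) k : map (fun l : letter S => (f l.1, l.2)) (Pi s t k) = Pi (f s) (f t) k.
Proof. rewrite /Pi /mkseq -map_comp; apply: eq_map => i /=; by case: (odd i). Qed.


Definition phiF (f : S -> S) (w : word S) : word S := map (fun l : letter S => (f l.1, l.2)) w.

Lemma phiF_ae (f : S -> S) :
  (forall a b k, a != b -> m a b = Some k -> artin_eq m (Pi (f a) (f b) k) (Pi (f b) (f a) k)) ->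
  forall w w', artin_eq m w w' -> artin_eq m (phiF f w) (phiF f w').
Proof.
move=> Hr w w'; elim=> {w w'}.
- move=> w; exact: ae_refl.
- move=> w1 w2 _ IH; exact: ae_sym.
- move=> w1 w2 w3 _ IH1 _ IH2; exact: ae_trans IH1 IH2.
- move=> u v s b; rewrite /phiF !map_cat /=; exact: ae_free.
- move=> u v s t k st mk; rewrite /phiF !map_cat !map_Pi; exact: ae_ctx (Hr _ _ _ st mk).
Qed.

End H.

Theorem lemma3p9 (S : finType) (m : S -> S -> option nat) :
  coxeter_matrix m -> retract_compatible m -> 2 <= #|S| ->
  forall x : S, exists phi : word S -> word S,
    ordinary_retraction m [set~ x] phi /\
    exists2 s, s \in [set~ x] & artin_eq m (phi [:: (x, false)]) [:: (s, false)].
Proof.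
move=> [_ Hsym _] [Hodd Htri] HS x.
pose val t := odflt 0 (m x t).
have [t0 Ht0] : exists t0, t0 != x.
  have : 0 < #|[set~ x]| by rewrite cardsC1; case: #|S| HS => [|[|]].
  by case/card_gt0P => t0; rewrite in_setC1 => ?; exists t0.
case: (@arg_minnP S t0 (fun t => t != x) val Ht0) => s sx Hmin.
pose f t := if t == x then s else t.
have Hdiv : forall b, b != x -> b != s -> exists2 k', m s b = Some k' & exists2 k, m x b = Some k & k' %| k.
  move=> b bx bs.
  have [a1 E1 o1] := Hodd x s; have [a2 E2 o2] := Hodd x b; have [a3 E3 o3] := Hodd s b.
  have E1' : m s x = Some a1 by rewrite Hsym.
  have E2' : m b x = Some a2 by rewrite Hsym.
  have E3' : m b s = Some a3 by rewrite Hsym.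
  have le12 : a1 <= a2 by have := Hmin b bx; rewrite /val E1 E2.
  exists a3 => //; exists a2 => //.
  have p1 : 0 < a1 by case: a1 o1 {E1 E1' le12}.
  have xs : x != s by rewrite eq_sym.
  have xb : x != b by rewrite eq_sym.
  have sb : s != b by rewrite eq_sym.
  case: (Htri x s b xs xb sb) => /=;
    [|move=> [|[|[|[|]]]]] => -[p [q [Ea Eb Ec Hd]]];
    rewrite ?E1 ?E2 ?E3 ?E1' ?E2' ?E3' in Ea Eb Ec;
    case: Ea => ?; case: Eb => ?; case: Ec => ?; subst => //.
  1,2: by have h := dvdn_leq p1 Hd; have -> : q = p by apply/eqP; rewrite eqn_leq h le12.
have fx : forall t, t != x -> f t = t by move=> t tx; rewrite /f (negbTE tx).
have Hr : forall a b k, a != b -> m a b = Some k -> artin_eq m (Pi (f a) (f b) k) (Pi (f b) (f a) k).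
  have key : forall b k, b != x -> m x b = Some k -> artin_eq m (Pi s b k) (Pi b s k).
    move=> b k bx mk; case: (eqVneq b s) => [->|bs]; first exact: ae_refl.
    have [k' E' [k0 E0 d]] := Hdiv b bx bs.
    move: E0; rewrite mk => -[Ek]; subst k0.
    have [k'' E'' o] := Hodd s b; move: E''; rewrite E' => -[Ek']; subst k''.
    have sb : s != b by rewrite eq_sym.
    have R : artin_eq m (Pi s b k') (Pi b s k').
      have := ae_rel [::] [::] sb E'; by rewrite /= !cats0.
    have := @Pi_mul S m s b k' (k %/ k') o R.
    by rewrite divnK.
  move=> a b k ab mk.
  case: (eqVneq a x) => [ax|ax]; case: (eqVneq b x) => [bx|bx].
  - by move: ab; rewrite ax bx eqxx.
  - rewrite ax (fx b bx) /f eqxx; apply: key => //; by rewrite -ax.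
  - rewrite bx (fx a ax) /f eqxx; apply: ae_sym; apply: key => //; by rewrite -bx Hsym.
  - rewrite (fx a ax) (fx b bx); have := ae_rel [::] [::] ab mk; by rewrite /= !cats0.
have fid : forall w : word S, all (fun l : letter S => l.1 \in [set~ x]) w -> phiF f w = w.
  move=> w Hw; rewrite /phiF; apply: map_id_in => -[t c] /(allP Hw) /=; rewrite in_setC1 => tx.
  by rewrite fx.
have Hs1 : f x = s by rewrite /f eqxx.
exists (phiF f); split; last first.
  exists s; first by rewrite in_setC1.
  rewrite /phiF /= Hs1; exact: ae_refl.
split.
- split.
  + split; first exact: phiF_ae.
    move=> u v; rewrite /phiF map_cat; exact: ae_refl.
  + move=> w; exists (phiF f w); split; last exact: ae_refl.
    apply/allP => -[t c] /mapP [[t' c'] _ [-> _]] /=; rewrite in_setC1 /f /=.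
    by case: (eqVneq t' x).
  + move=> w [w' [Hw' Hww']].
    apply: (ae_trans (w2 := phiF f w')); first exact: phiF_ae.
    rewrite fid //; exact: ae_sym.
- move=> t; rewrite in_setC1 => tx; rewrite /phiF /= fx //; exact: ae_refl.
- move=> y; rewrite in_setC1 negbK => /eqP ->; left; exists s; first by rewrite in_setC1.
  rewrite /phiF /= Hs1; exact: ae_refl.
Qed.
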